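(* Let $C$ be a connected rack that is finitely generated (but not necessarily finite). Then the assignment $R\mapsto|\mathrm{Mor}_{\mathcal{R}}(C,R)|$, sending a finite rack $R$ to the number of rack morphisms $C\to R$, is an additive invariant of finite racks, and the induced map $$\Phi_C\colon\mathrm{B}(\mathcal{R})\longrightarrow\mathbb{Z},\qquad b(R)\mapsto|\mathrm{Mor}_{\mathcal{R}}(C,R)|,$$ is a homomorphism of commutative rings.
   Context: A rack is a set $R$ with a binary operation $\rhd$ such that every left multiplication $\ell_a\colon b\mapsto a\rhd b$ is a bijection and $a\rhd(b\rhd c)=(a\rhd b)\rhd(a\rhd c)$ for all $a,b,c$; morphisms preserve $\rhd$. The inner automorphism group $\mathrm{Inn}(R)$ is the subgroup of the symmetric group on $R$ generated by all $\ell_a$; a rack is connected if it is non-empty and $\mathrm{Inn}(R)$ acts transitively on $R$. A subrack is a subset $S$ with $\ell_s(S)=S$ for all $s\in S$; a decomposition of $R$ into $S$ and $T$ means $S,T$ are disjoint subracks (possibly empty) with $S\cup T=R$. An additive invariant of finite racks with values in an abelian group $A$ is an assignment $R\mapsto a(R)\in A$ on finite racks with $a(R_1)=a(R_2)$ whenever $R_1\cong R_2$ and $a(R)=a(S)+a(T)$ whenever $R$ decomposes into $S$ and $T$. The Burnside ring of finite racks $\mathrm{B}(\mathcal{R})$ is the abelian group generated by symbols $b(R)$, one for each finite rack $R$, subject to $b(R_1)=b(R_2)$ whenever $R_1\cong R_2$ and $b(R)=b(S)+b(T)$ whenever $R$ decomposes into $S$ and $T$, with ring structure $b(R)b(R')=b(R\times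 R')$ (cartesian product, componentwise operation) and unit the class of the singleton. *)

(* Defs.v *)
From HB Require Import structures.
From mathcomp Require Import all_boot all_order all_algebra.
From mathcomp Require Import boolp classical_sets cardinality.
From mathcomp Require Import finmap.
Set Implicit Arguments. Unset Strict Implicit. Unset Printing Implicit Defensive.
Import GRing.Theory.

Local Open Scope classical_set_scope.

Definition is_rack {T : Type} (op : T -> T -> T) : Prop :=
  (forall a, bijective (op a)) /\
  (forall a b c, op a (op b c) = op (op a b) (op a c)).

Definition is_rack_morphism {T U : Type} (opT : T -> T -> T) (opU : U -> U -> U)
  (f : T -> U) : Prop := forall a b, f (opT a b) = opU (f a) (f b).

Definition is_subrack {T : Type} (op : T -> T -> T) (S : set T) : Prop :=
  forall s, S s -> op s @` S = S.

(* Inn(R): the subgroup of Sym(R) generated by the l_a, described as the set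
   of finite words in the l_a and their inverses. *)
Inductive inn_elt {T : Type} (op : T -> T -> T) : (T -> T) -> Prop :=
  | inn_id : inn_elt op id
  | inn_gen a g : inn_elt op g -> inn_elt op (op a \o g)
  | inn_inv a g h : inn_elt op g -> cancel (op a) h -> cancel h (op a) ->
      inn_elt op (h \o g).

Definition is_connected_rack {T : Type} (op : T -> T -> T) : Prop :=
  (exists x : T, True) /\
  (forall x y : T, exists2 g, inn_elt op g & g x = y).

(* finitely generated: some finite subset is contained in no proper subrack
   (i.e. the subrack it generates is the whole rack) *)
Definition is_fin_gen_rack {T : Type} (op : T -> T -> T) : Prop :=
  exists (k : nat) (gens : 'I_k -> T),
    forall S : set T, is_subrack op S -> range gens `<=` S -> S = setT.

Record finRack := FinRack {
  fr_sort :> finType;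
  fr_op : fr_sort -> fr_sort -> fr_sort;
  fr_ax : is_rack fr_op }.

Definition rack_iso (R1 R2 : finRack) : Prop :=
  exists f : R1 -> R2, bijective f /\ is_rack_morphism (@fr_op R1) (@fr_op R2) f.

Section Subrack.
Variables (R : finRack) (S : {set R}).
Hypothesis hS : is_subrack (@fr_op R) [set x | x \in S].

Lemma subrack_closed (a b : {x : R | x \in S}) : fr_op (val a) (val b) \in S.
Proof.
have : [set x | x \in S] (fr_op (val a) (val b)).
  by rewrite -(hS (valP a)); exists (val b) => //; exact: valP.
by [].
Qed.

Definition subrack_op (a b : {x : R | x \in S}) : {x : R | x \in S} :=
  exist _ (fr_op (val a) (val b)) (subrack_closed a b).

Lemma subrack_ax : is_rack subrack_op.
Proof.
have [bij dist] := fr_ax R; split.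
- move=> a; apply: injF_bij => x y /(congr1 val) /= E.
  by apply: val_inj; exact: (bij_inj (bij (val a)) E).
- by move=> a b c; apply: val_inj; rewrite /= dist.
Qed.

Definition subrack : finRack := FinRack subrack_ax.
End Subrack.

Section Prod.
Variables (R1 R2 : finRack).
Definition prod_op (x y : R1 * R2) : R1 * R2 :=
  (fr_op x.1 y.1, fr_op x.2 y.2).
Lemma prod_ax : is_rack prod_op.
Proof.
have [b1 d1] := fr_ax R1; have [b2 d2] := fr_ax R2; split.
- move=> a; apply: injF_bij => x y [/(bij_inj (b1 a.1)) E1 /(bij_inj (b2 a.2)) E2].
  by case: x y E1 E2 => ? ? [? ?] /= -> ->.
- by move=> a b c; rewrite /prod_op /= d1 d2.
Qed.
Definition prod_rack : finRack := FinRack prod_ax.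
End Prod.

Lemma unit_ax : is_rack (fun _ _ : unit => tt).
Proof. by split=> // a; exists id => -[] // [] []. Qed.
Definition unit_rack : finRack := FinRack unit_ax.

Definition additive_invariant (A : zmodType) (a : finRack -> A) : Prop :=
  (forall R1 R2 : finRack, rack_iso R1 R2 -> a R1 = a R2) /\
  (forall (R : finRack) (S T : {set R})
          (hS : is_subrack (@fr_op R) [set x | x \in S])
          (hT : is_subrack (@fr_op R) [set x | x \in T]),
      (S :&: T)%SET = finset.set0 -> (S :|: T)%SET = finset.setT ->
      a R = (a (subrack hS) + a (subrack hT))%R).

(* (B, b) is (a model of) the Burnside ring of finite racks B(R): b is the
   universal additive invariant (B is the abelian group presented by the
   generators b(R) and the relations of the definition), and the ring
   structure is given by b(R) b(R') = b(R x R') with unit b(singleton). *)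
Definition is_burnside_ring (B : comPzRingType) (b : finRack -> B) : Prop :=
  [/\ additive_invariant b,
      (forall (A : zmodType) (a : finRack -> A), additive_invariant a ->
          exists f : {additive B -> A}, forall R, f (b R) = a R),
      (forall (A : zmodType) (f g : {additive B -> A}),
          (forall R, f (b R) = g (b R)) -> f =1 g),
      (forall R R' : finRack, b (prod_rack R R') = (b R * b R')%R) &
      b unit_rack = 1%R].

Definition rack_mors {C : Type} (opC : C -> C -> C) (R : finRack) : set (C -> R) :=
  [set f | is_rack_morphism opC (@fr_op R) f].

(* |Mor(C, R)| (the cardinality of the set of morphisms; 0 if infinite) *)
Definition mor_count {C : Type} (opC : C -> C -> C) (R : finRack) : nat :=
  #|` fset_set (@rack_mors C opC R)|%fset.

(* Main.v *)
Require Import Defs.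
From HB Require Import structures.
From mathcomp Require Import all_boot all_order all_algebra.
From mathcomp Require Import boolp classical_sets cardinality finmap.
Set Implicit Arguments. Unset Strict Implicit. Unset Printing Implicit Defensive.
Import GRing.Theory.
Local Open Scope classical_set_scope.

Lemma fin_card_eq (X : choiceType) (T : finType) (A : set X) (F : X -> T) :
  (forall a b, A a -> A b -> F a = F b -> a = b) ->
  finite_set A /\ #|` fset_set A|%fset = #|[set t | `[< (F @` A) t >]]%SET|.
Proof.
move=> Finj.
have inj : {in A &, injective F}.
  by move=> a b; rewrite !in_setE; apply: Finj.
have finA : finite_set A.
  rewrite -(eq_finite_set (inj_card_eq inj)); exact: finite_finset.
split => //.
have -> : #|` fset_set A|%fset = #|` (F @` fset_set A)%fset|%fset.
  rewrite card_in_imfset //.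
  by move=> a b; rewrite !in_fset_set // !in_setE; apply: Finj.
rewrite -fset_set_image //.
rewrite -card_finset; congr (#|` _|)%fset.
apply/fsetP => t; rewrite in_fset_set; last exact: finite_finset.
rewrite !inE; apply/idP/idP => H; [apply/asboolP; rewrite -in_setE | rewrite in_setE; exact/asboolP] => //.
Qed.


Section Main.
Variables (C : Type) (opC : C -> C -> C).
Hypothesis hrack : is_rack opC.
Hypothesis hconn : is_connected_rack opC.
Variables (k : nat) (gens : 'I_k -> C).
Hypothesis hgens : forall S : set C, is_subrack opC S -> range gens `<=` S -> S = setT.

Definition enc (R : finRack) (m : C -> R) : {ffun 'I_k -> R} := [ffun i => m (gens i)].
Definition Mset (R : finRack) : {set {ffun 'I_k -> R}} :=
  [set t | `[< ((fun m : C -> R => enc m) @` @rack_mors C opC R) t >]]%SET.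

Lemma op_inj (R : finRack) (a : R) : injective (fr_op a).
Proof. exact: bij_inj ((fr_ax R).1 a). Qed.

Lemma mor_eq (R : finRack) (m1 m2 : C -> R) :
  is_rack_morphism opC (@fr_op R) m1 -> is_rack_morphism opC (@fr_op R) m2 ->
  enc m1 = enc m2 -> m1 = m2.
Proof.
move=> h1 h2 e; apply: funext => x.
have E : [set x | m1 x = m2 x] = setT.
  apply: hgens.
    move=> s /= Hs; apply/seteqP; split.
      by move=> _ [y /= Hy <-]; rewrite /= h1 h2 Hs Hy.
    move=> y /= Hy; have [h hK Kh] := hrack.1 s.
    exists (h y); last by rewrite Kh.
    apply: (@op_inj R (m2 s)); rewrite -h2 -{1}Hs -h1 Kh //.
  move=> _ [i _ <-] /=.
  by have := congr1 (fun f : {ffun _ -> _} => f i) e; rewrite !ffunE.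
have : [set x | m1 x = m2 x] x by rewrite E.
by [].
Qed.

Lemma count (R : finRack) :
  finite_set (@rack_mors C opC R) /\ mor_count opC R = #|Mset R|.
Proof.
apply: fin_card_eq => a b ha hb; exact: mor_eq.
Qed.

Lemma sub_op (R : finRack) (S : {set R})
  (hS : is_subrack (@fr_op R) [set x | x \in S]) r w :
  r \in S -> (fr_op r w \in S) = (w \in S).
Proof.
move=> rS; have E := hS r rS; apply/idP/idP => H.
  have : [set x | x \in S] (fr_op r w) by [].
  by rewrite -E => -[w' Hw' /op_inj <-].
have : (fr_op r @` [set x | x \in S]) (fr_op r w) by exists w.
by rewrite E.
Qed.

Lemma part (R : finRack) (S T : {set R}) :
  (S :&: T)%SET = finset.set0 -> (S :|: T)%SET = finset.setT ->
  forall x, (x \in S) = (x \notin T).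
Proof.
move=> I U x.
have : x \in (S :|: T)%SET by rewrite U inE.
have : x \notin (S :&: T)%SET by rewrite I inE.
by rewrite !inE; case: (x \in S); case: (x \in T).
Qed.

Lemma op_S (R : finRack) (S T : {set R})
  (hS : is_subrack (@fr_op R) [set x | x \in S])
  (hT : is_subrack (@fr_op R) [set x | x \in T]) :
  (S :&: T)%SET = finset.set0 -> (S :|: T)%SET = finset.setT ->
  forall r w, (fr_op r w \in S) = (w \in S).
Proof.
move=> I U r w; case: (boolP (r \in S)) => rS; first exact: sub_op.
have rT : r \in T by move: rS; rewrite (part I U) negbK.
by rewrite !(part I U) (sub_op hT).
Qed.

Lemma conn_S (R : finRack) (S T : {set R})
  (hS : is_subrack (@fr_op R) [set x | x \in S])
  (hT : is_subrack (@fr_op R) [set x | x \in T]) :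
  (S :&: T)%SET = finset.set0 -> (S :|: T)%SET = finset.setT ->
  forall m : C -> R, is_rack_morphism opC (@fr_op R) m ->
  forall c x, (m c \in S) = (m x \in S).
Proof.
move=> I U m hm c x.
have [g Hg <-] := hconn.2 x c.
elim: Hg => {g} [//|a g Hg IH|a g h Hg IH hK Kh] /=.
  by rewrite hm (op_S hS hT I U).
by rewrite -IH -{2}(Kh (g x)) hm (op_S hS hT I U).
Qed.

Lemma Mset_iso (R1 R2 : finRack) : rack_iso R1 R2 -> #|Mset R1| = #|Mset R2|.
Proof.
move=> [f [fb fm]]; have [g fK gK] := fb.
have gm : is_rack_morphism (@fr_op R2) (@fr_op R1) g.
  by move=> a b; apply: (bij_inj fb); rewrite fm !gK.
have Finj : injective (fun p : {ffun 'I_k -> R1} => [ffun i => f (p i)]).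
  move=> p q /ffunP e; apply/ffunP => i; have := e i; rewrite !ffunE.
  exact: (bij_inj fb).
rewrite -(card_imset _ Finj); apply: eq_card => psi; rewrite !inE.
apply/imsetP/asboolP.
  case=> phi; rewrite inE => /asboolP [m hm <-] ->.
  exists (f \o m); first by move=> a b /=; rewrite hm fm.
  by apply/ffunP => i; rewrite !ffunE.
case=> m hm <-; exists (enc (g \o m)).
  by rewrite inE; apply/asboolP; exists (g \o m) => // a b /=; rewrite hm gm.
by apply/ffunP => i; rewrite !ffunE /= gK.
Qed.


Lemma Mset_prod (R R' : finRack) :
  #|Mset (prod_rack R R')| = #|Mset R| * #|Mset R'|.
Proof.
pose G := fun p : {ffun 'I_k -> prod_rack R R'} =>
  ([ffun i => (p i).1], [ffun i => (p i).2]).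
have Ginj : injective G.
  move=> p q [/ffunP e1 /ffunP e2]; apply/ffunP => i.
  move: (e1 i) (e2 i); rewrite !ffunE.
  by case: (p i) => ? ?; case: (q i) => ? ? /= -> ->.
rewrite -cardsX -(card_imset _ Ginj); apply: eq_card => -[p1 p2]; rewrite !inE.
apply/imsetP/andP.
  case=> phi; rewrite inE => /asboolP [m hm <-]; rewrite /G => -[-> ->] /=; split; apply/asboolP.
    exists (fun c => (m c).1); first by move=> a b; rewrite /= hm.
    by apply/ffunP => i; rewrite !ffunE.
  exists (fun c => (m c).2); first by move=> a b; rewrite /= hm.
  by apply/ffunP => i; rewrite !ffunE.
case=> /asboolP [m1 h1 /= E1] /asboolP [m2 h2 /= E2]; subst p1 p2.
exists (enc (fun c => ((m1 c, m2 c) : prod_rack R R'))).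
  rewrite inE; apply/asboolP; exists (fun c => ((m1 c, m2 c) : prod_rack R R')) => //.
  by move=> a b; rewrite /= h1 h2.
by congr pair; apply/ffunP => i; rewrite !ffunE.
Qed.

Lemma Mset_unit : #|Mset unit_rack| = 1%N.
Proof.
have -> : Mset unit_rack = finset.setT.
  apply/finset.setP => psi; rewrite !inE; apply/asboolP.
  exists (fun _ => tt) => //.
  by apply/ffunP => i; rewrite !ffunE; case: (psi i).
by rewrite cardsT card_ffun card_unit exp1n.
Qed.


Lemma lift_mor (R : finRack) (S : {set R})
  (hS : is_subrack (@fr_op R) [set x | x \in S]) (m : C -> R)
  (hm : is_rack_morphism opC (@fr_op R) m) (allS : forall c, m c \in S) :
  exists2 m' : C -> subrack hS, is_rack_morphism opC (@fr_op _) m' &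
    enc m = [ffun i => val (enc m' i)].
Proof.
exists (fun c => (exist (fun x => x \in S) (m c) (allS c) : subrack hS)).
  by move=> a b; apply: val_inj; rewrite /= hm.
by apply/ffunP => i; rewrite !ffunE.
Qed.

Lemma val_mor (R : finRack) (S : {set R})
  (hS : is_subrack (@fr_op R) [set x | x \in S]) (m : C -> subrack hS)
  (hm : is_rack_morphism opC (@fr_op _) m) :
  is_rack_morphism opC (@fr_op R) (fun c => val (m c)).
Proof. by move=> a b; rewrite hm. Qed.

Lemma Mset_union (R : finRack) (S T : {set R})
  (hS : is_subrack (@fr_op R) [set x | x \in S])
  (hT : is_subrack (@fr_op R) [set x | x \in T]) :
  (S :&: T)%SET = finset.set0 -> (S :|: T)%SET = finset.setT ->
  #|Mset R| = (#|Mset (subrack hS)| + #|Mset (subrack hT)|)%N.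
Proof.
move=> I U.
have [x0 _] := hconn.1.
pose FS := fun p : {ffun 'I_k -> subrack hS} => [ffun i => val (p i)] : {ffun 'I_k -> R}.
pose FT := fun p : {ffun 'I_k -> subrack hT} => [ffun i => val (p i)] : {ffun 'I_k -> R}.
have FSinj : injective FS.
  move=> p q /ffunP e; apply/ffunP => i; apply: val_inj; have := e i; rewrite !ffunE.
  by [].
have FTinj : injective FT.
  move=> p q /ffunP e; apply/ffunP => i; apply: val_inj; have := e i; rewrite !ffunE.
  by [].
have -> : Mset R = (FS @: Mset (subrack hS) :|: FT @: Mset (subrack hT))%SET.
  apply/finset.setP => psi; rewrite !inE; apply/asboolP/orP.
    case=> m hm <-; case: (boolP (m x0 \in S)) => H.
      left; have allS c : m c \in S by rewrite (conn_S hS hT I U hm c x0).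
      have [m' hm' ->] := lift_mor hS hm allS.
      apply/imsetP; exists (enc m') => //.
      by rewrite inE; apply/asboolP; exists m'.
    right; have I' : (T :&: S)%SET = finset.set0 by rewrite finset.setIC.
    have U' : (T :|: S)%SET = finset.setT by rewrite finset.setUC.
    have H' : m x0 \in T by move: H; rewrite (part I U) negbK.
    have allT c : m c \in T by rewrite (conn_S hT hS I' U' hm c x0).
    have [m' hm' ->] := lift_mor hT hm allT.
    apply/imsetP; exists (enc m') => //.
    by rewrite inE; apply/asboolP; exists m'.
  case=> /imsetP [p]; rewrite inE => /asboolP [m hm <-] ->.
    exists (fun c => val (m c)); first exact: val_mor.
    by apply/ffunP => i; rewrite !ffunE.
  exists (fun c => val (m c)); first exact: val_mor.
  by apply/ffunP => i; rewrite !ffunE.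
rewrite cardsU !card_imset //.
suff -> : (FS @: Mset (subrack hS) :&: FT @: Mset (subrack hT))%SET = finset.set0.
  by rewrite cards0 subn0.
apply/finset.setP => psi; rewrite !inE; apply/negbTE/negP.
case/andP=> /imsetP [p1]; rewrite inE => /asboolP [m1 hm1 <-] ->.
case/imsetP=> p2; rewrite inE => /asboolP [m2 hm2 <-] E.
have E' : (fun c => val (m1 c)) = (fun c => val (m2 c)).
  apply: mor_eq; [exact: val_mor | exact: val_mor |].
  apply/ffunP => i; have := congr1 (fun f : {ffun _ -> _} => f i) E.
  by rewrite !ffunE.
have : val (m1 x0) \in (S :&: T)%SET.
  by rewrite inE (valP (m1 x0)) (congr1 (fun f => f x0) E') (valP (m2 x0)).
by rewrite I inE.
Qed.

End Main.


Definition mk_rmorph (B : comPzRingType) (f : B -> int) (h1 : GRing.nmod_morphism f) (h2 : GRing.monoid_morphism f) : {rmorphism B -> int} :=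
  HB.pack_for {rmorphism B -> int} f (GRing.isNmodMorphism.Build B int f h1) (GRing.isMonoidMorphism.Build B int f h2).
Definition mk_add (B A : zmodType) (f : B -> A) (h : GRing.zmod_morphism f) : {additive B -> A} :=
  HB.pack_for {additive B -> A} f (GRing.isZmodMorphism.Build B A f h).

Theorem proposition5p1 (C : Type) (opC : C -> C -> C)
  (hrack : is_rack opC) (hconn : is_connected_rack opC)
  (hfg : is_fin_gen_rack opC) :
  (forall R : finRack, finite_set (@rack_mors C opC R)) /\
  additive_invariant (fun R : finRack => Posz (mor_count opC R)) /\
  (forall (B : comPzRingType) (b : finRack -> B), is_burnside_ring b ->
     exists Phi : {rmorphism B -> int},
       forall R : finRack, Phi (b R) = Posz (mor_count opC R)).
Proof.
have [k [gens hgens]] := hfg.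
have cnt R := count hrack hgens R.
have addi : additive_invariant (fun R : finRack => Posz (mor_count opC R)).
  split.
    by move=> R1 R2 h; rewrite !(cnt _).2 (Mset_iso opC gens h).
  move=> R S T hS hT I U.
  by rewrite !(cnt _).2 (Mset_union hrack hconn hgens hS hT I U) PoszD.
split; first by move=> R; exact: (cnt R).1.
split => // B b [_ hU huniq hmul hunit].
have [Phi hPhi] := hU _ _ addi.
have amul R R' : Phi (b R * b R')%R = (Phi (b R) * Phi (b R'))%R.
  by rewrite -hmul !hPhi !(cnt _).2 (Mset_prod opC gens) PoszM.
have step1 R y : Phi (b R * y)%R = (Phi (b R) * Phi y)%R.
  have hf : GRing.zmod_morphism (fun y => Phi (b R * y)%R).
    by move=> u v /=; rewrite mulrBr raddfB.
  have hg : GRing.zmod_morphism (fun y => (Phi (b R) * Phi y)%R).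
    by move=> u v /=; rewrite raddfB mulrBr.
  exact: (huniq _ (mk_add hf) (mk_add hg) (amul R) y).
have step2 x y : Phi (x * y)%R = (Phi x * Phi y)%R.
  have hf : GRing.zmod_morphism (fun x => Phi (x * y)%R).
    by move=> u v /=; rewrite mulrBl raddfB.
  have hg : GRing.zmod_morphism (fun x => (Phi x * Phi y)%R).
    by move=> u v /=; rewrite raddfB mulrBl.
  exact: (huniq _ (mk_add hf) (mk_add hg) (fun R => step1 R y) x).
have h1 : Phi 1%R = 1%R.
  by rewrite -hunit hPhi (cnt _).2 (Mset_unit opC gens).
exists (mk_rmorph (raddf0 Phi, raddfD Phi) (h1, step2)).
exact: hPhi.
Qed.
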